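(* Assume (B1)–(B3). Let $\lambda>0$, $c_k>0$, $p_{k-1}\in\mathbb{R}^\ell$, $z_{k-1}\in\mathbb{R}^n$, $\sigma_{k-1}>0$, set $L^\psi_{k-1}:=\lambda\Lambda(c_k,p_{k-1})+1$, and let $(z_k,v_k,\varepsilon_k)\in\mathbb{R}^n\times\mathbb{R}^n\times\mathbb{R}_+$ satisfy $$v_k\in\partial_{\varepsilon_k}\Big(\lambda\mathcal L_{c_k}(\cdot;p_{k-1})+\tfrac12\|\cdot-z_{k-1}\|^2\Big)(z_k),\qquad \|v_k\|^2+2\varepsilon_k\le\sigma_{k-1}^2\|v_k+z_{k-1}-z_k\|^2.$$ Define $\delta_k:=\varepsilon_k/\lambda$, $r_k:=v_k+z_{k-1}-z_k$, $$\hat z_k:=\mathrm{argmin}_u\Big\{\lambda\big[\langle\nabla_z\widetilde{\mathcal L}_{c_k}(z_k;p_{k-1}),u-z_k\rangle+h(u)\big]-\langle r_k,u-z_k\rangle+\tfrac{L^\psi_{k-1}}{2}\|u-z_k\|^2\Big\},$$ $w_k:=\frac1\lambda[r_k+L^\psi_{k-1}(z_k-\hat z_k)]$, $p_k:=\Pi_{\mathcal K^*}(p_{k-1}+c_kg(z_k))$, $\hat p_k:=\Pi_{\mathcal K^*}(p_{k-1}+c_kg(\hat z_k))$, $\hat q_k:=\frac{1}{c_k}(p_{k-1}-\hat p_k)$, and $\hat w_k:=w_k+\nabla_z\widetilde{\mathcal L}_{c_k}(\hat z_k;p_{k-1})-\nabla_z\widetilde{\mathcal L}_{c_k}(z_k;p_{k-1})$.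 Then: (a) $w_k\in\nabla f(z_k)+\partial_{\delta_k}h(z_k)+\nabla g(z_k)p_k$, $\ \|w_k\|\le\frac1\lambda\big(1+\sigma_{k-1}\sqrt{L^\psi_{k-1}}\big)\|r_k\|$, and $\delta_k\le\frac{1}{2\lambda}\sigma_{k-1}^2\|r_k\|^2$; (b) $\hat w_k\in\nabla f(\hat z_k)+\partial h(\hat z_k)+\nabla g(\hat z_k)\hat p_k$, $\ \langle g(\hat z_k)+\hat q_k,\hat p_k\rangle=0$, $\ g(\hat z_k)+\hat q_k\preceq_{\mathcal K}0$, $\ \hat p_k\succeq_{\mathcal K^*}0$, and $$\|\hat w_k\|\le\frac1\lambda\big(1+2\sigma_{k-1}\sqrt{L^\psi_{k-1}}\big)\|r_k\|,\qquad \|\hat q_k\|\le\frac{B_g^{(1)}\sigma_{k-1}}{\sqrt{L^\psi_{k-1}}}\|r_k\|+\frac1{c_k}\|p_k-p_{k-1}\|.$$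
   Context: $\mathcal K\subseteq\mathbb{R}^\ell$ is a nonempty closed convex cone, $\mathcal K^*=\{y:\langle y,x\rangle\ge0\ \forall x\in\mathcal K\}$ its dual cone, $u\preceq_{\mathcal K}v$ means $v-u\in\mathcal K$, $\Pi_S$ is the Euclidean projection onto a closed convex set $S$ and $\mathrm{dist}(y,S)$ the Euclidean distance. For a proper function $\varphi$, $\partial_\varepsilon\varphi(z):=\{u:\varphi(z')\ge\varphi(z)+\langle u,z'-z\rangle-\varepsilon\ \forall z'\}$ and $\partial\varphi=\partial_0\varphi$. For differentiable $g:\mathbb{R}^n\to\mathbb{R}^\ell$, $\nabla g(z)\in\mathbb{R}^{n\times\ell}$ is the transpose of the Jacobian, with operator norm $\|\nabla g(z)\|$. $g$ is $\mathcal K$-convex if $g(tz'+(1-t)z)-tg(z')-(1-t)g(z)\preceq_{\mathcal K}0$ for all $z,z'$, $t\in[0,1]$. (B1) $h:\mathbb{R}^n\to(-\infty,\infty]$ is proper, lower semicontinuous, convex, and $K_h$-Lipschitz continuous on its domain for some $K_h>0$; $\mathcal H:=\mathrm{dom}\,h$ is compact with diameter $D_h$. (B2) $f$ is (not necessarily convex and) differentiable on an open set containing $\mathcal H$, and there are $m_f,L_f>0$ with $f(z')-f(z)-\langle\nabla f(z),z'-z\rangle\ge-\frac{m_f}{2}\|z'-z\|^2$ and $\|\nabla f(z')-\nabla f(z)\|\le L_f\|z'-z\|$ for all $z,z'\in\mathcal H$. (B3) $g:\mathbb{R}^n\to\mathbb{R}^\ell$ is $\mathcal K$-convex and differentiable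 with $L_g$-Lipschitz $\nabla g$ on $\mathbb{R}^n$, $L_g>0$. Constants: $B_g^{(0)}:=\sup_{\mathcal H}\|g\|$, $B_g^{(1)}:=\sup_{\mathcal H}\|\nabla g\|$. Functions: $\mathcal L_c(z;p):=f(z)+h(z)+\frac1{2c}[\mathrm{dist}^2(p+cg(z),-\mathcal K)-\|p\|^2]$ (augmented Lagrangian), $\widetilde{\mathcal L}_c(z;p):=f(z)+\frac1{2c}[\mathrm{dist}^2(p+cg(z),-\mathcal K)-\|p\|^2]$, whose $z$-gradient is $\nabla_z\widetilde{\mathcal L}_c(z;p)=\nabla f(z)+\nabla g(z)\Pi_{\mathcal K^*}(p+cg(z))$, and $\Lambda(c,p):=L_f+L_g\|p\|+c(B_g^{(0)}L_g+[B_g^{(1)}]^2)$. *)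

(* Defs.v *)
From HB Require Import structures.
From mathcomp Require Import all_boot all_order all_algebra.
From mathcomp Require Import all_classical all_reals all_analysis.
Set Implicit Arguments. Unset Strict Implicit. Unset Printing Implicit Defensive.
Import Order.TTheory GRing.Theory Num.Theory numFieldNormedType.Exports.
Local Open Scope classical_set_scope.
Local Open Scope ring_scope.

Section Defs.
Variable R : realType.

Definition dotv {m : nat} (u v : 'cV[R]_m) : R := \sum_(i < m) u i 0 * v i 0.
Definition enorm {m : nat} (u : 'cV[R]_m) : R := Num.sqrt (dotv u u).

Definition opnorm {n l : nat} (M : 'M[R]_(n, l)) : R :=
  sup [set enorm (M *m x) | x in [set x : 'cV[R]_l | enorm x <= 1]].

Definition edist {m : nat} (y : 'cV[R]_m) (S : set 'cV[R]_m) : R :=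
  inf [set enorm (y - s) | s in S].

(* Euclidean projection onto S (the nearest point; unique when S is a
   nonempty closed convex set) *)
Definition eproj {m : nat} (S : set 'cV[R]_m) (y : 'cV[R]_m) : 'cV[R]_m :=
  xget 0 [set x | S x /\ forall s, S s -> enorm (y - x) <= enorm (y - s)].

Definition dual_cone {m : nat} (K : set 'cV[R]_m) : set 'cV[R]_m :=
  [set y | forall x, K x -> 0 <= dotv y x].

Definition negset {m : nat} (K : set 'cV[R]_m) : set 'cV[R]_m := [set x | K (- x)].

Definition closed_convex_cone {m : nat} (K : set 'cV[R]_m) : Prop :=
  [/\ K !=set0, closed K,
      (forall x t, K x -> 0 <= t -> K (t *: x)) &
      (forall x y t, K x -> K y -> 0 <= t <= 1 -> K (t *: x + (1 - t) *: y))].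

Definition has_grad {n : nat} (f : 'cV[R]_n -> R) (gf : 'cV[R]_n) (z : 'cV[R]_n) : Prop :=
  forall e : R, 0 < e -> exists d : R, 0 < d /\
    forall y, enorm (y - z) < d ->
      `| f y - f z - dotv gf (y - z) | <= e * enorm (y - z).

(* Frechet differentiability of a vector map at z, with transposed Jacobian Dg *)
Definition has_tjac {n l : nat} (g : 'cV[R]_n -> 'cV[R]_l) (Dg : 'M[R]_(n, l))
    (z : 'cV[R]_n) : Prop :=
  forall e : R, 0 < e -> exists d : R, 0 < d /\
    forall y, enorm (y - z) < d ->
      enorm (g y - g z - Dg^T *m (y - z)) <= e * enorm (y - z).

Definition ext {n : nat} (H : set 'cV[R]_n) (h : 'cV[R]_n -> R) (z : 'cV[R]_n) : \bar R :=
  if `[< H z >] then (h z)%:E else +oo%E.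

Definition esubdiff {n : nat} (phi : 'cV[R]_n -> \bar R) (eps : R) (z u : 'cV[R]_n) : Prop :=
  forall z', (phi z + (dotv u (z' - z) - eps)%:E <= phi z')%E.

Definition Bg0 {n l : nat} (H : set 'cV[R]_n) (g : 'cV[R]_n -> 'cV[R]_l) : R :=
  sup [set enorm (g z) | z in H].
Definition Bg1 {n l : nat} (H : set 'cV[R]_n) (Dg : 'cV[R]_n -> 'M[R]_(n, l)) : R :=
  sup [set opnorm (Dg z) | z in H].

Definition Lambda {n l : nat} (H : set 'cV[R]_n) (g : 'cV[R]_n -> 'cV[R]_l)
  (Dg : 'cV[R]_n -> 'M[R]_(n, l)) (Lf Lg c : R) (p : 'cV[R]_l) : R :=
  Lf + Lg * enorm p + c * (Bg0 H g * Lg + (Bg1 H Dg) ^+ 2).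

Definition augL {n l : nat} (f : 'cV[R]_n -> R) (H : set 'cV[R]_n) (h : 'cV[R]_n -> R)
  (g : 'cV[R]_n -> 'cV[R]_l) (K : set 'cV[R]_l) (c : R) (p : 'cV[R]_l) (z : 'cV[R]_n)
  : \bar R :=
  ((f z + (edist (p + c *: g z) (negset K) ^+ 2 - enorm p ^+ 2) / (2 * c))%:E
    + ext H h z)%E.

Definition gradLt {n l : nat} (gradf : 'cV[R]_n -> 'cV[R]_n) (g : 'cV[R]_n -> 'cV[R]_l)
  (Dg : 'cV[R]_n -> 'M[R]_(n, l)) (K : set 'cV[R]_l) (c : R) (p : 'cV[R]_l)
  (z : 'cV[R]_n) : 'cV[R]_n :=
  gradf z + Dg z *m eproj (dual_cone K) (p + c *: g z).

End Defs.

(* Main.v *)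
Require Import Defs.
From HB Require Import structures.
From mathcomp Require Import all_boot all_order all_algebra.
From mathcomp Require Import all_classical all_reals all_analysis.
From mathcomp Require Import ring lra.
Import Order.TTheory GRing.Theory Num.Theory numFieldNormedType.Exports.
Local Open Scope classical_set_scope.
Local Open Scope ring_scope.


Module Aux.
Set Implicit Arguments. Unset Strict Implicit. Unset Printing Implicit Defensive.

Section Vec.
Variable R : realType.
Variable m : nat.
Implicit Types u v w : 'cV[R]_m.

Lemma dotvC u v : dotv u v = dotv v u.
Proof. by rewrite /dotv; apply: eq_bigr => i _; rewrite mulrC. Qed.

Lemma dotvDl u w v : dotv (u + w) v = dotv u v + dotv w v.
Proof. by rewrite /dotv -big_split; apply: eq_bigr => i _; rewrite mxE mulrDl. Qed.

Lemma dotvZl a u v : dotv (a *: u) v = a * dotv u v.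
Proof. by rewrite /dotv mulr_sumr; apply: eq_bigr => i _; rewrite mxE mulrA. Qed.

Lemma dotvNl u v : dotv (- u) v = - dotv u v.
Proof. by rewrite -scaleN1r dotvZl mulN1r. Qed.

Lemma dotvBl u w v : dotv (u - w) v = dotv u v - dotv w v.
Proof. by rewrite dotvDl dotvNl. Qed.

Lemma dotvDr u v w : dotv u (v + w) = dotv u v + dotv u w.
Proof. by rewrite dotvC dotvDl !(dotvC u). Qed.

Lemma dotvZr a u v : dotv u (a *: v) = a * dotv u v.
Proof. by rewrite dotvC dotvZl dotvC. Qed.

Lemma dotvNr u v : dotv u (- v) = - dotv u v.
Proof. by rewrite dotvC dotvNl dotvC. Qed.

Lemma dotvBr u v w : dotv u (v - w) = dotv u v - dotv u w.
Proof. by rewrite dotvDr dotvNr. Qed.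

Lemma dotv0l v : dotv 0 v = 0.
Proof. by rewrite -(scale0r 0) dotvZl mul0r. Qed.

Lemma dotv0r v : dotv v 0 = 0.
Proof. by rewrite dotvC dotv0l. Qed.

Lemma dotvv_ge0 u : 0 <= dotv u u.
Proof. by apply: sumr_ge0 => i _; rewrite -expr2 sqr_ge0. Qed.

Lemma dotvv_eq0 u : dotv u u = 0 -> u = 0.
Proof.
move=> /eqP; rewrite /dotv psumr_eq0; last by move=> i _; rewrite -expr2 sqr_ge0.
move=> /allP H; apply/matrixP => i j; rewrite mxE (ord1 j).
have := H i (mem_index_enum _); rewrite -expr2 sqrf_eq0 => /eqP ->//.
Qed.

Lemma enorm_ge0 u : 0 <= enorm u.
Proof. exact: sqrtr_ge0. Qed.

Lemma enorm_sq u : enorm u ^+ 2 = dotv u u.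
Proof. by rewrite sqr_sqrtr // dotvv_ge0. Qed.

Lemma enorm0 : enorm (0 : 'cV[R]_m) = 0.
Proof. by rewrite /enorm dotv0l sqrtr0. Qed.

Lemma enormZ a u : enorm (a *: u) = `|a| * enorm u.
Proof.
by rewrite /enorm dotvZl dotvZr mulrA -expr2 sqrtrM ?sqr_ge0 // sqrtr_sqr.
Qed.

Lemma enormN u : enorm (- u) = enorm u.
Proof. by rewrite -scaleN1r enormZ normrN1 mul1r. Qed.

Lemma enormB u v : enorm (u - v) = enorm (v - u).
Proof. by rewrite -enormN opprB. Qed.

Lemma enormD2 u v : enorm (u + v) ^+ 2 = enorm u ^+ 2 + 2 * dotv u v + enorm v ^+ 2.
Proof. rewrite !enorm_sq !dotvDl !dotvDr (dotvC v u); ring. Qed.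

Lemma enormB2 u v : enorm (u - v) ^+ 2 = enorm u ^+ 2 - 2 * dotv u v + enorm v ^+ 2.
Proof. by rewrite enormD2 enormN dotvNr; ring. Qed.

Lemma sq_le (a b : R) : 0 <= b -> a ^+ 2 <= b ^+ 2 -> a <= b.
Proof.
move=> b0 h; apply: le_trans (ler_norm a) _.
by rewrite -sqrtr_sqr -(ger0_norm b0) -sqrtr_sqr ler_sqrt // sqr_ge0.
Qed.

Lemma enorm_eq0 u : enorm u = 0 -> u = 0.
Proof. by move=> h; apply: dotvv_eq0; rewrite -enorm_sq h expr0n. Qed.

Lemma CS u v : dotv u v <= enorm u * enorm v.
Proof.
have [->|v0] := eqVneq v 0; first by rewrite dotv0r enorm0 mulr0.
have Bp : 0 < dotv v v.
  rewrite lt_neqAle dotvv_ge0 andbT; apply/eqP => /esym /dotvv_eq0 h.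
  by rewrite h eqxx in v0.
set A := dotv u u; set B := dotv v v; set C := dotv u v.
have key : 0 <= B * (A * B - C ^+ 2).
  have := dotvv_ge0 (B *: u - C *: v).
  rewrite !dotvBl !dotvBr !dotvZl !dotvZr (dotvC v u) -/A -/B -/C.
  move=> h; nra.
have hC : C ^+ 2 <= A * B by move: key; rewrite pmulr_rge0 // subr_ge0.
apply: sq_le; first by rewrite mulr_ge0 // enorm_ge0.
by rewrite exprMn !enorm_sq.
Qed.

Lemma CSabs u v : `|dotv u v| <= enorm u * enorm v.
Proof.
rewrite ler_norml CS andbT lerNl -dotvNl.
by apply: le_trans (CS _ _) _; rewrite enormN.
Qed.

Lemma enormD u v : enorm (u + v) <= enorm u + enorm v.
Proof.
apply: sq_le; first by rewrite addr_ge0 // enorm_ge0.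
rewrite enormD2 sqrrD; have := CS u v; lra.
Qed.

Lemma enormDB u v w : enorm (u - w) <= enorm (u - v) + enorm (v - w).
Proof. by rewrite (_ : u - w = (u - v) + (v - w)) ?enormD // addrA subrK. Qed.

Lemma dotv_mul k (M : 'M[R]_(m, k)) (x : 'cV[R]_k) (y : 'cV[R]_m) :
  dotv (M *m x) y = dotv x (M^T *m y).
Proof.
rewrite /dotv.
under eq_bigr => i _ do rewrite mxE big_distrl /=.
rewrite exchange_big /=; apply: eq_bigr => j _.
rewrite mxE big_distrr /=; apply: eq_bigr => i _; rewrite mxE; ring.
Qed.

Lemma coord_le u i : `|u i 0| <= enorm u.
Proof.
apply: sq_le; first exact: enorm_ge0.
rewrite enorm_sq real_normK ?num_real // /dotv (bigD1 i) //= -expr2 lerDl.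
by apply: sumr_ge0 => j _; rewrite -expr2 sqr_ge0.
Qed.

Lemma enorm_le_sum u : enorm u <= \sum_i `|u i 0|.
Proof.
apply: sq_le; first by apply: sumr_ge0.
rewrite enorm_sq /dotv expr2 big_distrl /=; apply: ler_sum => i _.
apply: le_trans (ler_norm _) _; rewrite normrM ler_wpM2l //.
by rewrite (bigD1 i) //= lerDl sumr_ge0.
Qed.

End Vec.

Section Op.
Variable R : realType.
Variables m k : nat.
Implicit Types M : 'M[R]_(m, k).

Lemma opnorm_has_sup M :
  has_sup [set enorm (M *m x) | x in [set x : 'cV[R]_k | enorm x <= 1]].
Proof.
split.
  by exists (enorm (M *m 0)), 0 => //=; rewrite enorm0 ler01.
exists (\sum_i \sum_j `|M i j|) => _ [x /= hx <-].
apply: le_trans (enorm_le_sum _) _; apply: ler_sum => i _.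
rewrite mxE; apply: le_trans (ler_norm_sum _ _ _) _; apply: ler_sum => j _.
rewrite normrM ler_piMr //; apply: le_trans (coord_le _ _) hx.
Qed.

Lemma opnorm_ge0 M : 0 <= opnorm M.
Proof.
apply: le_trans (sup_upper_bound (opnorm_has_sup M) _).
  exact: (enorm_ge0 (M *m 0)).
by exists 0 => //=; rewrite enorm0 ler01.
Qed.

Lemma opnormP M x : enorm (M *m x) <= opnorm M * enorm x.
Proof.
have [->|x0] := eqVneq x 0; first by rewrite mulmx0 !enorm0 mulr0.
have xp : 0 < enorm x.
  by rewrite lt_neqAle enorm_ge0 andbT; apply/eqP => /esym/enorm_eq0 h; rewrite h eqxx in x0.
have hx : enorm ((enorm x)^-1 *: x) <= 1.
  by rewrite enormZ ger0_norm ?invr_ge0 ?enorm_ge0 // mulVf ?gt_eqF.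
have := sup_upper_bound (opnorm_has_sup M) (imageP (fun x => enorm (M *m x)) (A := [set x | enorm x <= 1]) hx).
rewrite -scalemxAr enormZ ger0_norm ?invr_ge0 ?enorm_ge0 // -/(opnorm M).
by rewrite ler_pdivrMl // mulrC.
Qed.

Lemma opnormT M d : enorm (M^T *m d) <= opnorm M * enorm d.
Proof.
set y := M^T *m d.
have [y0|yp] := eqVneq (enorm y) 0.
  by rewrite y0 mulr_ge0 ?opnorm_ge0 ?enorm_ge0.
have yp' : 0 < enorm y by rewrite lt_neqAle eq_sym yp enorm_ge0.
have h1 : enorm y ^+ 2 <= enorm d * (opnorm M * enorm y).
  rewrite enorm_sq {1}/y dotv_mul trmxK dotvC.
  apply: le_trans (CS _ _) _; rewrite mulrC ler_wpM2l ?enorm_ge0 //.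
  exact: opnormP.
rewrite expr2 mulrA mulrC [X in _ <= X]mulrC in h1.
by rewrite ler_pM2l // mulrC in h1.
Qed.

Lemma opnorm_leP M C : 0 <= C -> (forall x, enorm (M *m x) <= C * enorm x) ->
  opnorm M <= C.
Proof.
move=> C0 h; apply: ge_sup; first by case: (opnorm_has_sup M).
move=> _ [x /= hx <-]; apply: le_trans (h x) _.
by rewrite ler_piMr.
Qed.

End Op.

Section Calc.
Variable R : realType.

Definition dcond (phi D : R -> R) := forall t, 0 <= t <= 1 -> forall e, 0 < e ->
  exists d, 0 < d /\ forall s, 0 <= s <= 1 -> `|s - t| < d ->
    `|phi s - phi t - D t * (s - t)| <= e * `|s - t|.

Lemma mono01 (phi D : R -> R) : dcond phi D ->
  (forall t, 0 <= t <= 1 -> D t <= 0) -> phi 1 <= phi 0.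
Proof.
move=> hd hD; apply/ler_addgt0Pr => e e0.
pose S := [set t : R | 0 <= t <= 1 /\ phi t <= phi 0 + e * t].
have S0 : S 0 by split; rewrite ?lexx ?ler01 // mulr0 addr0.
have hS : has_sup S.
  by split; [exists 0 | exists 1 => t [/andP[_ ->]]].
pose T := sup S.
have T0 : 0 <= T by apply: sup_upper_bound.
have T1 : T <= 1 by apply: ge_sup; [exists 0 | move=> t [/andP[]]].
have T01 : 0 <= T <= 1 by rewrite T0 T1.
have [d [d0 hd']] := hd T T01 e e0.
have hDT := hD T T01.
have ST : S T.
  have [s Ss hs] := sup_adherent d0 hS.
  have sT : s <= T by apply: sup_upper_bound.
  case: Ss => /andP[s0 s1] hs'.
  have hst : `|s - T| < d by rewrite distrC ger0_norm ?subr_ge0 // ltrBlDr -ltrBlDl.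
  have s01 : 0 <= s <= 1 by rewrite s0 s1.
  have := hd' s s01 hst.
  rewrite (@ler0_norm _ (s - T)) ?subr_le0 // ler_norml => /andP [h1 h2].
  split => //.
  have : D T * (T - s) <= 0 by rewrite mulr_le0_ge0 // subr_ge0.
  rewrite -/T. nra.
have T1' : T = 1.
  apply/eqP; rewrite eq_le T1 /=; rewrite leNgt; apply/negP => lt1.
  have [s [Ts s1 sd]] : exists s, [/\ T < s, s <= 1 & s - T < d].
    have [h|h] := leP (T + d / 2) 1.
      exists (T + d / 2); split => //; first by rewrite ltrDl divr_gt0.
      by rewrite addrC addKr ltr_pdivrMr // ltr_pMr // ltr1n.
    exists 1; split => //; lra.
  have s01 : 0 <= s <= 1 by rewrite s1 andbT; apply: le_trans (ltW Ts).
  have hst : `|s - T| < d by rewrite ger0_norm // subr_ge0 ltW.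
  have := hd' s s01 hst.
  rewrite (@ger0_norm _ (s - T)) ?subr_ge0 ?(ltW Ts) // ler_norml => /andP [h1 h2].
  have Ss : S s.
    split => //; case: ST => _ hT.
    have : D T * (s - T) <= 0 by rewrite mulr_le0_ge0 // subr_ge0 ltW.
    nra.
  have := sup_upper_bound hS Ss; rewrite -/T => hsT.
  by move: Ts; rewrite ltNge hsT.
by case: ST => _; rewrite T1' mulr1.
Qed.

Lemma deriv_bound (psi D : R -> R) (A B : R) : dcond psi D ->
  (forall t, 0 <= t <= 1 -> D t <= A + B * t) ->
  psi 1 - psi 0 <= A + B / 2.
Proof.
move=> hd hD.
pose phi t := psi t - A * t - B / 2 * t ^+ 2.
suff : phi 1 <= phi 0 by rewrite /phi; lra.
apply: (@mono01 phi (fun t => D t - A - B * t)); last first.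
  by move=> t /hD; lra.
move=> t t01 e e0.
have [d [d0 hd']] := hd t t01 (e / 2) (divr_gt0 e0 (ltr0Sn _ 1)).
pose d' := Num.min d (e / (`|B| + 1)).
have Bp : 0 < `|B| + 1 by rewrite ltr_pwDr.
exists d'; split; first by rewrite lt_min d0 divr_gt0.
move=> s s01; rewrite lt_min => /andP [sd sd'].
have := hd' s s01 sd => h.
have eq : phi s - phi t - (D t - A - B * t) * (s - t) =
   (psi s - psi t - D t * (s - t)) - B / 2 * (s - t) ^+ 2.
  by rewrite /phi /=; field.
rewrite eq; apply: le_trans (ler_normB _ _) _.
have h2 : `|B / 2 * (s - t) ^+ 2| <= e / 2 * `|s - t|.
  have hs0 : 0 <= `|s - t| by [].
  have hb : `|B| * `|s - t| <= e.
    move: sd'; rewrite ltr_pdivlMr // => hh.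
    apply: le_trans (ltW hh); nra.
  rewrite normrM normrX normrM (@ger0_norm _ (2^-1)) ?invr_ge0 ?ler0n //.
  set a := `|s - t| in hs0 hb *; set b := `|B| in hb *.
  rewrite expr2; nra.
have : e / 2 * `|s - t| + e / 2 * `|s - t| = e * `|s - t| by field.
lra.
Qed.

End Calc.

Section Seg.
Variable R : realType.
Variables n l : nat.

Lemma segB (z d : 'cV[R]_n) s t : (z + s *: d) - (z + t *: d) = (s - t) *: d.
Proof. by rewrite opprD addrACA subrr add0r scalerBl. Qed.

Lemma enorm_seg (z d : 'cV[R]_n) s t :
  enorm ((z + s *: d) - (z + t *: d)) = `|s - t| * enorm d.
Proof. by rewrite segB enormZ. Qed.

Lemma seg_f (f : 'cV[R]_n -> R) (gradf : 'cV[R]_n -> 'cV[R]_n) (z d : 'cV[R]_n) :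
  (forall t, 0 <= t <= 1 -> has_grad f (gradf (z + t *: d)) (z + t *: d)) ->
  dcond (fun t => f (z + t *: d)) (fun t => dotv (gradf (z + t *: d)) d).
Proof.
move=> hg t t01 e e0.
have c0 : 0 < enorm d + 1 by rewrite ltr_pwDr // enorm_ge0.
have [del [del0 hdel]] := hg t t01 (e / (enorm d + 1)) (divr_gt0 e0 c0).
exists (del / (enorm d + 1)); split; first exact: divr_gt0.
move=> s s01 hst.
have hy : enorm ((z + s *: d) - (z + t *: d)) < del.
  rewrite enorm_seg; move: hst; rewrite ltr_pdivlMr // => hh.
  apply: le_lt_trans hh; rewrite ler_wpM2l //; lra.
have := hdel _ hy.
rewrite segB dotvZr enormZ => hh.
apply: le_trans; first by rewrite mulrC; exact: hh.
set N := enorm d; set a := `|s - t|.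
have N0 : 0 <= N by apply: enorm_ge0.
have hN1 : N + 1 != 0 by rewrite gt_eqF.
have -> : e / (N + 1) * (a * N) = e * a * (N / (N + 1)) by field.
apply: ler_piMr; first by apply: mulr_ge0; [apply: ltW | apply: normr_ge0].
by rewrite ler_pdivrMr ?mul1r; lra.
Qed.

Lemma seg_g (g : 'cV[R]_n -> 'cV[R]_l) (Dg : 'cV[R]_n -> 'M[R]_(n, l))
  (z d : 'cV[R]_n) (ev : 'cV[R]_l) :
  (forall z, has_tjac g (Dg z) z) ->
  dcond (fun t => dotv ev (g (z + t *: d)))
        (fun t => dotv ev ((Dg (z + t *: d))^T *m d)).
Proof.
move=> hg t t01 e e0.
have c0 : 0 < enorm d + 1 by rewrite ltr_pwDr // enorm_ge0.
have c1 : 0 < enorm ev + 1 by rewrite ltr_pwDr // enorm_ge0.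
have [del [del0 hdel]] := hg (z + t *: d) (e / ((enorm ev + 1) * (enorm d + 1)))
   (divr_gt0 e0 (mulr_gt0 c1 c0)).
exists (del / (enorm d + 1)); split; first exact: divr_gt0.
move=> s s01 hst.
have hy : enorm ((z + s *: d) - (z + t *: d)) < del.
  rewrite enorm_seg; move: hst; rewrite ltr_pdivlMr // => hh.
  apply: le_lt_trans hh; rewrite ler_wpM2l //; lra.
have := hdel _ hy.
rewrite segB enormZ -scalemxAr => hh.
have eq : dotv ev (g (z + s *: d)) - dotv ev (g (z + t *: d)) -
   dotv ev ((Dg (z + t *: d))^T *m d) * (s - t) =
   dotv ev (g (z + s *: d) - g (z + t *: d) - (s - t) *: ((Dg (z + t *: d))^T *m d)).
  by rewrite !dotvBr dotvZr mulrC.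
rewrite eq; apply: le_trans (CSabs _ _) _.
set E := enorm ev in hh *; set N := enorm d in hh *; set a := `|s - t| in hh *.
have E0 : 0 <= E by apply: enorm_ge0.
have N0 : 0 <= N by apply: enorm_ge0.
have a0 : 0 <= a by apply: normr_ge0.
apply: le_trans (ler_wpM2l E0 hh) _.
have q : E * (e / ((E + 1) * (N + 1)) * (a * N)) =
   e * a * ((E / (E + 1)) * (N / (N + 1))).
  have hN1 : N + 1 != 0 by rewrite gt_eqF //; lra.
  have hE1 : E + 1 != 0 by rewrite gt_eqF //; lra.
  by field; rewrite hN1 hE1.
rewrite q; apply: ler_piMr; first by apply: mulr_ge0; [apply: ltW | apply: normr_ge0].
apply: mulr_ile1; try (apply: divr_ge0 => //; lra);
  rewrite ler_pdivrMr ?mul1r; lra.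
Qed.

End Seg.

Section Bounds.
Variable R : realType.
Variables n l : nat.

Lemma seg_eq (z z' : 'cV[R]_n) t : z + t *: (z' - z) = t *: z' + (1 - t) *: z.
Proof. by rewrite scalerBr scalerBl scale1r addrCA. Qed.

Lemma seg_end (z z' : 'cV[R]_n) : z + 1 *: (z' - z) = z'.
Proof. by rewrite scale1r addrC subrK. Qed.

Lemma seg_start (z z' : 'cV[R]_n) : z + 0 *: (z' - z) = z.
Proof. by rewrite scale0r addr0. Qed.

Lemma descent_f (f : 'cV[R]_n -> R) (gradf : 'cV[R]_n -> 'cV[R]_n)
  (H : set 'cV[R]_n) (Lf : R) :
  (forall z z' t, H z -> H z' -> 0 <= t <= 1 -> H (t *: z' + (1 - t) *: z)) ->
  (forall z, H z -> has_grad f (gradf z) z) ->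
  (forall z z', H z -> H z' -> enorm (gradf z' - gradf z) <= Lf * enorm (z' - z)) ->
  forall z z', H z -> H z' ->
  f z' - f z - dotv (gradf z) (z' - z) <= Lf / 2 * enorm (z' - z) ^+ 2.
Proof.
move=> hcvx hg hlip z z' Hz Hz'.
set d := z' - z.
have HP t : 0 <= t <= 1 -> H (z + t *: d) by move=> t01; rewrite /d seg_eq; exact: hcvx.
have := @deriv_bound R (fun t => f (z + t *: d)) (fun t => dotv (gradf (z + t *: d)) d)
  (dotv (gradf z) d) (Lf * enorm d ^+ 2) (seg_f (fun t t01 => hg _ (HP t t01))).
rewrite /d seg_end seg_start -/d.
have -> : Lf * enorm d ^+ 2 / 2 = Lf / 2 * enorm d ^+ 2 by rewrite mulrAC.
move=> h.
suff hD : forall t, 0 <= t <= 1 ->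
    dotv (gradf (z + t *: d)) d <= dotv (gradf z) d + Lf * enorm d ^+ 2 * t.
  by have := h hD; lra.
move=> t t01.
have hd : dotv (gradf (z + t *: d)) d = dotv (gradf z) d + dotv (gradf (z + t *: d) - gradf z) d.
  by rewrite dotvBl; ring.
rewrite hd lerD2l; apply: le_trans (CS _ _) _.
have := hlip _ _ Hz (HP t t01); rewrite (addrAC z) subrr add0r enormZ.
move: t01 => /andP [t0 t1]; rewrite ger0_norm // => hl.
apply: le_trans (ler_wpM2r (enorm_ge0 _) hl) _.
by rewrite expr2; lra.
Qed.


Lemma remainder_g (g : 'cV[R]_n -> 'cV[R]_l) (Dg : 'cV[R]_n -> 'M[R]_(n, l)) (Lg : R) :
  (forall z, has_tjac g (Dg z) z) ->
  (forall z z', opnorm (Dg z' - Dg z) <= Lg * enorm (z' - z)) ->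
  forall ev z z',
  dotv ev (g z' - g z - (Dg z)^T *m (z' - z)) <= Lg / 2 * enorm ev * enorm (z' - z) ^+ 2.
Proof.
move=> hg hlip ev z z'.
set d := z' - z.
have := @deriv_bound R (fun t => dotv ev (g (z + t *: d)))
  (fun t => dotv ev ((Dg (z + t *: d))^T *m d))
  (dotv ev ((Dg z)^T *m d)) (Lg * enorm ev * enorm d ^+ 2) (@seg_g R n l g Dg z d ev hg).
rewrite /d seg_end seg_start -/d.
move=> h.
suff hD : forall t, 0 <= t <= 1 ->
    dotv ev ((Dg (z + t *: d))^T *m d) <=
    dotv ev ((Dg z)^T *m d) + Lg * enorm ev * enorm d ^+ 2 * t.
  by have := h hD; rewrite !dotvBr; lra.
move=> t t01.
have hd : dotv ev ((Dg (z + t *: d))^T *m d) = dotv ev ((Dg z)^T *m d)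
   + dotv ev ((Dg (z + t *: d) - Dg z)^T *m d).
  by rewrite (linearB (@trmx R n l)) mulmxBl dotvBr; ring.
rewrite hd lerD2l; apply: le_trans (CS _ _) _.
apply: le_trans (ler_wpM2l (enorm_ge0 _) (opnormT _ _)) _.
have := hlip z (z + t *: d); rewrite (addrAC z) subrr add0r enormZ.
move: t01 => /andP [t0 t1]; rewrite ger0_norm // => hl.
have E0 := enorm_ge0 ev; have N0 := enorm_ge0 d.
have := ler_wpM2r N0 hl => hl2.
have := ler_wpM2l E0 hl2; rewrite expr2; nra.
Qed.

Lemma lip_g (g : 'cV[R]_n -> 'cV[R]_l) (Dg : 'cV[R]_n -> 'M[R]_(n, l)) (C : R) z z' :
  (forall z, has_tjac g (Dg z) z) ->
  (forall t, 0 <= t <= 1 -> opnorm (Dg (z + t *: (z' - z))) <= C) ->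
  enorm (g z' - g z) <= C * enorm (z' - z).
Proof.
move=> hg hC.
have C0 : 0 <= C by apply: le_trans (opnorm_ge0 _) (hC 0 _); rewrite lexx ler01.
set d := z' - z; set ev := g z' - g z.
have := @deriv_bound R (fun t => dotv ev (g (z + t *: d)))
  (fun t => dotv ev ((Dg (z + t *: d))^T *m d))
  (C * enorm ev * enorm d) 0 (@seg_g R n l g Dg z d ev hg).
rewrite /d seg_end seg_start -/d.
move=> h.
suff hD : forall t, 0 <= t <= 1 ->
    dotv ev ((Dg (z + t *: d))^T *m d) <= C * enorm ev * enorm d + 0 * t.
  have := h hD; rewrite -dotvBr -/ev -enorm_sq mul0r addr0 => h2.
  have [E0|Ep] := eqVneq (enorm ev) 0.
    by rewrite E0 mulr_ge0 // enorm_ge0.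
  have Ep' : 0 < enorm ev by rewrite lt_neqAle eq_sym Ep enorm_ge0.
  have h3 : enorm ev * enorm ev <= enorm ev * (C * enorm d).
    by rewrite expr2 in h2; apply: le_trans h2 _; rewrite mulrCA mulrA.
  by rewrite ler_pM2l in h3.
move=> t t01; rewrite mul0r addr0.
apply: le_trans (CS _ _) _.
apply: le_trans (ler_wpM2l (enorm_ge0 _) (opnormT _ _)) _.
have E0 := enorm_ge0 ev; have N0 := enorm_ge0 d.
have := hC t t01 => hl.
have := ler_wpM2r N0 hl => hl2.
have := ler_wpM2l E0 hl2; nra.
Qed.

End Bounds.

Section Topo.
Variable R : realType.
Variable l : nat.

Lemma enorm_rev (a b : 'cV[R]_l) : `|enorm a - enorm b| <= enorm (a - b).
Proof.
rewrite ler_norml; apply/andP; split.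
  have := enormD (b - a) a; rewrite subrK enormB; lra.
have := enormD (a - b) b; rewrite subrK; lra.
Qed.

Lemma trmx_cont : continuous (@trmx R 1 l).
Proof.
move=> x s /= /(nbhs_ballP (x^T)) [e e0 es].
apply/nbhs_ballP; exists e => //= N [_ MN]; apply: es; split => // i j.
by rewrite !mxE; exact: MN.
Qed.

Lemma phi_cont (y : 'cV[R]_l) : continuous (fun r : 'rV[R]_l => enorm (y + r^T)).
Proof.
move=> x s /= /nbhs_ballP [e e0 es].
have l0 : 0 < l%:R + 1 :> R by rewrite ltr_pwDr // ler0n.
apply/nbhs_ballP; exists (e / (l%:R + 1)); first by apply: divr_gt0.
move=> N [_ MN]; apply: es => /=.
apply: le_lt_trans (enorm_rev _ _) _.
apply: le_lt_trans (enorm_le_sum _) _.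
apply: (@le_lt_trans _ _ (\sum_(i < l) (e / (l%:R + 1)))).
  apply: ler_sum => i _; rewrite !mxE opprD addrACA subrr add0r.
  exact: ltW (MN 0 i).
rewrite sumr_const card_ord -[e / (l%:R + 1) *+ l]mulr_natr.
rewrite mulrAC ltr_pdivrMr // ltr_pM2l //; lra.
Qed.

Lemma cV_entry_le (r : 'rV[R]_l) i : `|r 0 i| <= enorm (r^T).
Proof. by have := coord_le (r^T) i; rewrite mxE. Qed.

Lemma mx_norm_le_enorm (r : 'rV[R]_l) : `|r| <= enorm (r^T).
Proof.
rewrite [leLHS]/Num.Def.normr /= mx_normrE; apply: bigmax_le; first exact: enorm_ge0.
by move=> [i j] _ /=; rewrite (ord1 i); exact: cV_entry_le.
Qed.

Lemma min_exists (K : set 'cV[R]_l) (y : 'cV[R]_l) : closed K -> K 0 ->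
  exists k1, K k1 /\ forall k, K k -> enorm (y + k1) <= enorm (y + k).
Proof.
move=> Kc K0.
pose rho := enorm y *+ 2.
pose A := [set r : 'rV[R]_l | K r^T /\ enorm (0 + r^T) <= rho].
have Acl : closed A.
  apply: (@closedI _ (@trmx R 1 l @^-1` K)
    ((fun r : 'rV[R]_l => enorm (0 + r^T)) @^-1` [set x | x <= rho])).
    exact: ((continuous_closedP (@trmx R 1 l)).1 (@trmx_cont) K Kc).
  exact: ((continuous_closedP _).1 (@phi_cont 0) _ (@closed_le R rho)).
have Ab : bounded_set A.
  exists rho; split; first by rewrite num_real.
  move=> M hM r [_ hr]; apply: le_trans (ltW hM).
  by apply: le_trans (mx_norm_le_enorm _) _; rewrite add0r in hr.
have Acp : compact A by apply: bounded_closed_compact.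
have A0 : A !=set0.
  exists 0; split; first by rewrite trmx0.
  by rewrite trmx0 addr0 enorm0 /rho mulrn_wge0 // enorm_ge0.
have hcont : {within A, continuous (fun r : 'rV[R]_l => enorm (y + r^T))}.
  by apply: continuous_subspaceT; exact: phi_cont.
have [c cA hc] := compact_EVT_min A0 Acp hcont.
rewrite in_setE in cA; case: cA => Kc1 _.
exists c^T; split => // k Kk.
have [hk|hk] := leP (enorm (y + k)) (enorm y).
  have Ak : A k^T.
    split; first by rewrite trmxK.
    rewrite trmxK add0r.
    have := enormD (y + k) (- y); rewrite addrC addKr enormN /rho mulr2n; lra.
  by have := hc k^T (mem_set Ak); rewrite trmxK.
have := hc 0 (mem_set _).
rewrite trmx0 addr0 => h; apply: le_trans (ltW hk).
apply: h; split; first by rewrite trmx0.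
by rewrite trmx0 addr0 enorm0 /rho mulrn_wge0 // enorm_ge0.
Qed.

End Topo.

Lemma small_pos (R : realType) (a b : R) :
  (forall s, 0 < s -> s <= 1 -> 0 <= a + s * b) -> 0 <= a.
Proof.
move=> h; rewrite leNgt; apply/negP => a0.
pose s := (- a) / (- a + `|b|).
have d0 : 0 < - a + `|b| by rewrite ltr_wpDr // oppr_gt0.
have s0 : 0 < s by apply: divr_gt0; rewrite ?oppr_gt0.
have s1 : s <= 1 by rewrite ler_pdivrMr // mul1r lerDl.
have := h s s0 s1.
have : s * `|b| < - a.
  rewrite /s mulrAC ltr_pdivrMr // ltr_pM2l ?oppr_gt0 //.
  lra.
have := ler_norm b; have := ltW s0; nra.
Qed.

Section Proj.
Variable R : realType.
Variable l : nat.
Variable K : set 'cV[R]_l.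
Hypothesis HK : closed_convex_cone K.

Lemma cone0 : K 0.
Proof.
case: HK => [[x Kx] _ hZ _]; have := hZ x 0 Kx (lexx _); by rewrite scale0r.
Qed.

Lemma coneZ x t : K x -> 0 <= t -> K (t *: x).
Proof. by case: HK => _ _ hZ _; exact: hZ. Qed.

Lemma coneD x y : K x -> K y -> K (x + y).
Proof.
case: HK => _ _ hZ hC Kx Ky.
have h : 0 <= (2^-1 : R) <= 1.
  by rewrite invr_ge0 ler0n /= invf_le1 // ?ler1n // ltr0n.
have := hC x y 2^-1 Kx Ky h.
have -> : 1 - 2^-1 = 2^-1 :> R by field.
move=> /(coneZ (t := 2)) => /(_ (ler0n _ 2)).
by rewrite scalerDr !scalerA mulfV ?pnatr_eq0 // !scale1r.
Qed.

Definition pr (y : 'cV[R]_l) := eproj (dual_cone K) y.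

Lemma pr_spec y :
  [/\ dual_cone K (pr y), negset K (y - pr y) & dotv (y - pr y) (pr y) = 0].
Proof.
case: HK => _ Kc _ _.
have [k1 [Kk1 hk1]] := min_exists y Kc cone0.
pose p0 := y + k1.
have quad : forall k s, K (k1 + s *: k) -> 0 <= 2 * s * dotv p0 k + s ^+ 2 * enorm k ^+ 2.
  move=> k s Kks; have := hk1 _ Kks.
  rewrite addrA -/p0 => hh.
  have : enorm p0 ^+ 2 <= enorm (p0 + s *: k) ^+ 2.
    by rewrite ler_pXn2r ?nnegrE ?enorm_ge0.
  rewrite enormD2 dotvZr enormZ exprMn real_normK ?num_real //; lra.
have dual : dual_cone K p0.
  move=> k Kk.
  suff : 0 <= 2 * dotv p0 k by lra.
  apply: (@small_pos _ _ (enorm k ^+ 2)) => s s0 s1.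
  have := quad k s (coneD Kk1 (coneZ Kk (ltW s0))).
  have -> : 2 * s * dotv p0 k + s ^+ 2 * enorm k ^+ 2 =
     s * (2 * dotv p0 k + s * enorm k ^+ 2) by ring.
  by rewrite pmulr_rge0.
have orth : dotv p0 k1 = 0.
  apply/eqP; rewrite eq_le (dual _ Kk1) andbT.
  suff : 0 <= - 2 * dotv p0 k1 by lra.
  apply: (@small_pos _ _ (enorm k1 ^+ 2)) => s s0 s1.
  have Kk : K (k1 + (- s) *: k1).
    have -> : k1 + (- s) *: k1 = (1 - s) *: k1.
      by rewrite scalerBl scale1r scaleNr.
    by apply: coneZ => //; lra.
  have := quad k1 (- s) Kk.
  have -> : 2 * - s * dotv p0 k1 + (- s) ^+ 2 * enorm k1 ^+ 2 =
     s * (- 2 * dotv p0 k1 + s * enorm k1 ^+ 2) by ring.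
  by rewrite pmulr_rge0.
have ident : forall s, enorm (y - s) ^+ 2 = enorm (p0 - s) ^+ 2 + 2 * dotv s k1 + enorm k1 ^+ 2.
  move=> s.
  have -> : y - s = (p0 - s) - k1 by rewrite /p0 addrAC addrK.
  rewrite enormB2 dotvBl orth dotvC; ring.
pose P := [set x | dual_cone K x /\ forall s, dual_cone K s -> enorm (y - x) <= enorm (y - s)].
have P0 : P p0.
  split => // s Ks.
  rewrite -(ler_pXn2r (n := 2)) ?nnegrE ?enorm_ge0 //.
  rewrite ident (ident s).
  have := Ks _ Kk1; have := enorm_ge0 (p0 - s); rewrite subrr enorm0; nra.
have : pr y = p0.
  have [Px hx] := xgetPex 0 (ex_intro P p0 P0).
  rewrite /pr /eproj -/P; set x := xget _ _ in Px hx *.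
  have := hx p0 (P0.1).
  rewrite -(ler_pXn2r (n := 2)) ?nnegrE ?enorm_ge0 //.
  rewrite ident (ident p0) subrr enorm0 orth expr0n /= => hh.
  have hx1 := Px _ Kk1.
  have h2 : enorm (p0 - x) ^+ 2 <= 0 by lra.
  apply/eqP; rewrite eq_sym -subr_eq0; apply/eqP/enorm_eq0.
  apply/eqP; rewrite eq_le enorm_ge0 andbT.
  by rewrite -(ler_pXn2r (n := 2)) ?nnegrE ?enorm_ge0 ?lexx // expr0n.
move=> ->.
have -> : y - p0 = - k1 by rewrite /p0 opprD addrA subrr add0r.
split => //; first by rewrite /negset /= opprK.
by rewrite dotvNl dotvC orth oppr0.
Qed.

Lemma pr_dual y : dual_cone K (pr y). Proof. by case: (pr_spec y). Qed.
Lemma pr_neg y : negset K (y - pr y). Proof. by case: (pr_spec y). Qed.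
Lemma pr_orth y : dotv (y - pr y) (pr y) = 0. Proof. by case: (pr_spec y). Qed.

Lemma pr_norm y : enorm (pr y) <= enorm y.
Proof.
rewrite -(ler_pXn2r (n := 2)) ?nnegrE ?enorm_ge0 //.
have -> : y = (y - pr y) + pr y by rewrite subrK.
rewrite enormD2 pr_orth subrK.
have := sqr_ge0 (enorm (y - pr y)); lra.
Qed.

Lemma pr_lip y y' : enorm (pr y - pr y') <= enorm (y - y').
Proof.
set p := pr y; set p' := pr y'.
have h1 : enorm (p - p') ^+ 2 <= dotv (p - p') (y - y').
  have o1 := pr_orth y; have o2 := pr_orth y'.
  have a1 : 0 <= dotv p (- (y' - p')) by apply: pr_dual; exact: pr_neg.
  have a2 : 0 <= dotv p' (- (y - p)) by apply: pr_dual; exact: pr_neg.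
  rewrite -/p in o1; rewrite -/p' in o2.
  set k := y - p in o1 a2; set k' := y' - p' in o2 a1.
  have hy : y = k + p by rewrite /k subrK.
  have hy' : y' = k' + p' by rewrite /k' subrK.
  clearbody k k'; rewrite hy hy' enorm_sq.
  rewrite dotvNr in a1; rewrite dotvNr in a2.
  rewrite (dotvC k p) in o1; rewrite (dotvC k' p') in o2.
  have sym : dotv p' p = dotv p p' by rewrite dotvC.
  rewrite ?dotvBl ?dotvBr ?dotvDr ?dotvBr ?dotvDr; lra.
have [e0|ep] := eqVneq (enorm (p - p')) 0; first by rewrite e0 enorm_ge0.
have ep' : 0 < enorm (p - p') by rewrite lt_neqAle eq_sym ep enorm_ge0.
have := le_trans h1 (CS _ _); rewrite expr2 ler_pM2l //.
Qed.

Lemma edist_le y k : negset K k -> Defs.edist y (negset K) <= enorm (y - k).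
Proof.
move=> Kk; apply: ge_inf; last by exists k.
by exists 0 => _ [s _ <-]; exact: enorm_ge0.
Qed.

Lemma edist_eq y : Defs.edist y (negset K) = enorm (pr y).
Proof.
apply/eqP; rewrite eq_le; apply/andP; split.
  by have := @edist_le y (y - pr y) (pr_neg y); rewrite opprB addrC subrK.
apply: lb_le_inf; first by exists (enorm (y - 0)), 0 => //; rewrite /negset /= oppr0; exact: cone0.
move=> _ [k Kk <-].
rewrite -(ler_pXn2r (n := 2)) ?nnegrE ?enorm_ge0 //.
set p := pr y.
have -> : y - k = p + ((y - p) - k) by rewrite addrA (addrC p) subrK.
have o := pr_orth y; rewrite -/p in o.
rewrite enormD2 dotvBr (dotvC p (y - p)) o.
have : 0 <= dotv p (- k) by apply: pr_dual.
rewrite dotvNr; have := sqr_ge0 (enorm (y - p - k)); lra.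
Qed.

End Proj.

Lemma ext_in (R : realType) n (H : set 'cV[R]_n) h u : H u -> ext H h u = (h u)%:E.
Proof. by move=> Hu; rewrite /ext asboolT. Qed.

Lemma ext_out (R : realType) n (H : set 'cV[R]_n) h u : ~ H u -> ext H h u = +oo%E.
Proof. by move=> Hu; rewrite /ext asboolF. Qed.

Lemma small_pos2 (R : realType) (a b : R) :
  (forall s, 0 < s -> s <= 1 -> 0 <= s * a + s ^+ 2 * b) -> 0 <= a.
Proof.
move=> h; apply: (@small_pos _ _ b) => s s0 s1.
have := h s s0 s1.
have -> : s * a + s ^+ 2 * b = s * (a + s * b) by rewrite expr2; ring.
by rewrite pmulr_rge0.
Qed.

Section HBounds.
Variable R : realType.
Variables n l : nat.
Variable H : set 'cV[R]_n.
Variable g : 'cV[R]_n -> 'cV[R]_l.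
Variable Dg : 'cV[R]_n -> 'M[R]_(n, l).
Variable Lg : R.
Hypothesis Hne : H !=set0.
Hypothesis Hcpt : compact H.
Hypothesis hg : forall z, has_tjac g (Dg z) z.
Hypothesis hLg : 0 < Lg.
Hypothesis hlip : forall z z', opnorm (Dg z' - Dg z) <= Lg * enorm (z' - z).

Lemma H_bounded : exists rho, 0 <= rho /\ forall x, H x -> enorm x <= rho.
Proof.
have [M [_ hM]] := compact_bounded Hcpt.
exists ((`|M| + 1) *+ n); split; first by rewrite mulrn_wge0 // addr_ge0.
move=> x Hx.
have hx : `|x| <= `|M| + 1.
  apply: hM => //; apply: le_lt_trans (ler_norm M) _; lra.
apply: le_trans (enorm_le_sum _) _.
apply: (@le_trans _ _ (\sum_(i < n) (`|M| + 1))); last by rewrite sumr_const card_ord.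
apply: ler_sum => i _.
apply: le_trans hx.
rewrite [leRHS]/Num.Def.normr /= mx_normrE.
exact: (@le_bigmax _ _ _ 0 (fun ij : 'I_n * 'I_1 => `|x ij.1 ij.2|) (i, 0)).
Qed.

Lemma opnorm_shift z1 x : opnorm (Dg x) <= opnorm (Dg z1) + Lg * enorm (x - z1).
Proof.
apply: opnorm_leP; first by rewrite addr_ge0 ?opnorm_ge0 // mulr_ge0 ?enorm_ge0 // ltW.
move=> v.
have -> : Dg x *m v = Dg z1 *m v + (Dg x - Dg z1) *m v by rewrite mulmxBl addrC subrK.
apply: le_trans (enormD _ _) _; rewrite mulrDl.
apply: lerD; first exact: opnormP.
apply: le_trans (opnormP _ _) _.
by rewrite ler_wpM2r ?enorm_ge0 // hlip.
Qed.

Lemma Bg1_has_sup : has_sup [set opnorm (Dg z) | z in H].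
Proof.
have [rho [rho0 hrho]] := H_bounded.
case: Hne => z1 Hz1.
split; first by exists (opnorm (Dg z1)), z1.
exists (opnorm (Dg z1) + Lg * (rho *+ 2)) => _ [x Hx <-].
apply: le_trans (opnorm_shift z1 x) _; rewrite lerD2l; apply: ler_wpM2l; first exact: ltW.
apply: le_trans (enormD _ _) _; rewrite enormN mulr2n.
by apply: lerD; apply: hrho.
Qed.

Lemma Bg1_ub z : H z -> opnorm (Dg z) <= Bg1 H Dg.
Proof. by move=> Hz; apply: sup_upper_bound Bg1_has_sup _ _; exists z. Qed.

Lemma Bg1_ge0 : 0 <= Bg1 H Dg.
Proof. by case: Hne => z Hz; apply: le_trans (opnorm_ge0 _) (Bg1_ub Hz). Qed.

Lemma Bg0_has_sup : has_sup [set enorm (g z) | z in H].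
Proof.
have [rho [rho0 hrho]] := H_bounded.
case: Hne => z1 Hz1.
split; first by exists (enorm (g z1)), z1.
pose C := opnorm (Dg z1) + Lg * (rho *+ 2).
exists (enorm (g z1) + C * (rho *+ 2)) => _ [x Hx <-].
have hd : enorm (x - z1) <= rho *+ 2.
  apply: le_trans (enormD _ _) _; rewrite enormN mulr2n.
  by apply: lerD; apply: hrho.
have hC : forall t, 0 <= t <= 1 -> opnorm (Dg (z1 + t *: (x - z1))) <= C.
  move=> t /andP [t0 t1].
  apply: le_trans (opnorm_shift z1 _) _; rewrite lerD2l; apply: ler_wpM2l; first exact: ltW.
  rewrite addrAC subrr add0r enormZ ger0_norm //.
  apply: le_trans hd; rewrite ler_piMl ?enorm_ge0 //.
have := lip_g hg hC => h1.
have -> : g x = g z1 + (g x - g z1) by rewrite addrC subrK.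
apply: le_trans (enormD _ _) _; rewrite lerD2l.
apply: le_trans h1 _; rewrite ler_wpM2l //.
rewrite /C; apply: addr_ge0; first exact: opnorm_ge0.
by apply: mulr_ge0; [exact: ltW | exact: mulrn_wge0].
Qed.

Lemma Bg0_ub z : H z -> enorm (g z) <= Bg0 H g.
Proof. by move=> Hz; apply: sup_upper_bound Bg0_has_sup _ _; exists z. Qed.

Lemma Bg0_ge0 : 0 <= Bg0 H g.
Proof. by case: Hne => z Hz; apply: le_trans (enorm_ge0 _) (Bg0_ub Hz). Qed.

End HBounds.

End Aux.
Import Aux.

Theorem proposition3p3 (R : realType) (n l : nat)
  (* data of the problem *)
  (f : 'cV[R]_n -> R) (gradf : 'cV[R]_n -> 'cV[R]_n)
  (H : set 'cV[R]_n) (h : 'cV[R]_n -> R) (Kh mf Lf : R)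
  (g : 'cV[R]_n -> 'cV[R]_l) (Dg : 'cV[R]_n -> 'M[R]_(n, l)) (Lg : R)
  (K : set 'cV[R]_l)
  (* K is a nonempty closed convex cone *)
  (HK : closed_convex_cone K)
  (* (B1): h = ext H h is proper, lsc, convex, Kh-Lipschitz on its compact domain H *)
  (HB1ne : H !=set0) (HB1cpt : compact H)
  (HB1lsc : lower_semicontinuous (ext H h))
  (HB1cvxH : forall z z' t, H z -> H z' -> 0 <= t <= 1 -> H (t *: z' + (1 - t) *: z))
  (HB1cvxh : forall z z' t, H z -> H z' -> 0 <= t <= 1 ->
     h (t *: z' + (1 - t) *: z) <= t * h z' + (1 - t) * h z)
  (HKh : 0 < Kh)
  (HB1lip : forall z z', H z -> H z' -> `|h z' - h z| <= Kh * enorm (z' - z))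
  (* (B2) *)
  (HB2diff : exists U : set 'cV[R]_n, [/\ open U, H `<=` U &
                forall z, U z -> has_grad f (gradf z) z])
  (Hmf : 0 < mf) (HLf : 0 < Lf)
  (HB2low : forall z z', H z -> H z' ->
     f z' - f z - dotv (gradf z) (z' - z) >= - (mf / 2) * enorm (z' - z) ^+ 2)
  (HB2lip : forall z z', H z -> H z' ->
     enorm (gradf z' - gradf z) <= Lf * enorm (z' - z))
  (* (B3) *)
  (HB3cvx : forall z z' t, 0 <= t <= 1 ->
     negset K (g (t *: z' + (1 - t) *: z) - t *: g z' - (1 - t) *: g z))
  (HB3diff : forall z, has_tjac g (Dg z) z)
  (HLg : 0 < Lg)
  (HB3lip : forall z z', opnorm (Dg z' - Dg z) <= Lg * enorm (z' - z))
  (* iteration data *)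
  (lam c sigma : R) (p0 : 'cV[R]_l) (z0 z v : 'cV[R]_n) (eps : R)
  (Hlam : 0 < lam) (Hc : 0 < c) (Hsigma : 0 < sigma) (Heps : 0 <= eps)
  (Hv : esubdiff (fun u => (lam%:E * augL f H h g K c p0 u
                            + (enorm (u - z0) ^+ 2 / 2)%:E)%E) eps z v)
  (Herr : enorm v ^+ 2 + 2 * eps <= sigma ^+ 2 * enorm (v + z0 - z) ^+ 2)
  (zhat : 'cV[R]_n) :
  let Lpsi := lam * Lambda H g Dg Lf Lg c p0 + 1 in
  let delta := eps / lam in
  let r := v + z0 - z in
  let gL := gradLt gradf g Dg K c p0 in
  let obj := fun u : 'cV[R]_n =>
    ((lam * dotv (gL z) (u - z) - dotv r (u - z) + Lpsi / 2 * enorm (u - z) ^+ 2)%:E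
     + lam%:E * ext H h u)%E in
  (* zhat is the argmin defining \hat z_k *)
  (forall u, (obj zhat <= obj u)%E) ->
  let w := lam^-1 *: (r + Lpsi *: (z - zhat)) in
  let pk := eproj (dual_cone K) (p0 + c *: g z) in
  let phat := eproj (dual_cone K) (p0 + c *: g zhat) in
  let qhat := c^-1 *: (p0 - phat) in
  let what := w + gL zhat - gL z in
  (* (a) *)
  ((exists u, esubdiff (ext H h) delta z u /\ w = gradf z + u + Dg z *m pk)
   /\ enorm w <= lam^-1 * (1 + sigma * Num.sqrt Lpsi) * enorm r
   /\ delta <= (2 * lam)^-1 * sigma ^+ 2 * enorm r ^+ 2)
  /\
  (* (b) *)
  ((exists u, esubdiff (ext H h) 0 zhat u /\ what = gradf zhat + u + Dg zhat *m phat)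
   /\ dotv (g zhat + qhat) phat = 0
   /\ negset K (g zhat + qhat)
   /\ dual_cone K phat
   /\ enorm what <= lam^-1 * (1 + 2 * sigma * Num.sqrt Lpsi) * enorm r
   /\ enorm qhat <= Bg1 H Dg * sigma / Num.sqrt Lpsi * enorm r
                    + c^-1 * enorm (pk - p0)).

Proof.
move=> Lpsi delta r gL obj Hzhat w pk phat qhat what.
have [h0 Hh0] := HB1ne.
have hgrad : forall x, H x -> has_grad f (gradf x) x.
  by case: HB2diff => U [_ HU hU] x Hx; apply: hU; apply: HU.
have B1ub := Bg1_ub HB1ne HB1cpt HLg HB3lip.
have B0ub := Bg0_ub HB1ne HB1cpt HB3diff HLg HB3lip.
have B1ge0 := Bg1_ge0 HB1ne HB1cpt HLg HB3lip.
have B0ge0 := Bg0_ge0 HB1ne HB1cpt HB3diff HLg HB3lip.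
set B0 := Bg0 H g in B0ub B0ge0 *.
set B1 := Bg1 H Dg in B1ub B1ge0 *.
have Lam0 : 0 <= Lambda H g Dg Lf Lg c p0.
  rewrite /Lambda -/B0 -/B1.
  apply: addr_ge0; first (apply: addr_ge0; [exact: ltW | apply: mulr_ge0; [exact: ltW | exact: enorm_ge0]]).
  apply: mulr_ge0; first exact: ltW.
  apply: addr_ge0; [apply: mulr_ge0 => //; exact: ltW | exact: sqr_ge0].
set Lam := Lambda H g Dg Lf Lg c p0 in Lam0.
have eLp : Lpsi = lam * Lam + 1 by [].
have egL : forall x, gL x = gradf x + Dg x *m pr K (p0 + c *: g x) by [].
have er : r = v + z0 - z by [].
have ew : w = lam^-1 *: (r + Lpsi *: (z - zhat)) by [].
have epk : pk = pr K (p0 + c *: g z) by [].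
have ephat : phat = pr K (p0 + c *: g zhat) by [].
have eqhat : qhat = c^-1 *: (p0 - phat) by [].
have ewhat : what = w + gL zhat - gL z by [].
have edelta : delta = eps / lam by [].
have eobj : forall u, obj u = ((lam * dotv (gL z) (u - z) - dotv r (u - z)
   + Lpsi / 2 * enorm (u - z) ^+ 2)%:E + lam%:E * ext H h u)%E by [].
clearbody what qhat phat pk w obj gL r delta Lpsi.
have Lpsi1 : 1 <= Lpsi by rewrite eLp lerDr mulr_ge0 // ltW.
have Lpsi0 : 0 < Lpsi by apply: lt_le_trans Lpsi1.
have lamE : (0 < lam%:E)%E by rewrite lte_fin.
have Phi_in : forall u, H u ->
  (lam%:E * augL f H h g K c p0 u + (enorm (u - z0) ^+ 2 / 2)%:E)%E =
  (lam * (f u + (Defs.edist (p0 + c *: g u) (negset K) ^+ 2 - enorm p0 ^+ 2) / (2 * c) + h u)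
    + enorm (u - z0) ^+ 2 / 2)%:E.
  by move=> u Hu; rewrite /augL ext_in // -EFinD -EFinM -EFinD.
have Phi_out : forall u, ~ H u ->
  (lam%:E * augL f H h g K c p0 u + (enorm (u - z0) ^+ 2 / 2)%:E)%E = +oo%E.
  by move=> u Hu; rewrite /augL ext_out // addey // gt0_muley // addye.
have Hz : H z.
  apply: contrapT => nHz; have := Hv h0.
  by rewrite Phi_out // Phi_in // addye // leye_eq.
have obj_out : forall u, ~ H u -> obj u = +oo%E.
  by move=> u Hu; rewrite eobj ext_out // gt0_muley // addey.
have obj_in : forall u, H u -> obj u = (lam * dotv (gL z) (u - z) - dotv r (u - z)
   + Lpsi / 2 * enorm (u - z) ^+ 2 + lam * h u)%:E.
  by move=> u Hu; rewrite eobj ext_in // -EFinM -EFinD.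
have Hzh : H zhat.
  apply: contrapT => nH; have := Hzhat h0.
  by rewrite obj_out // obj_in // leye_eq.
have lamn0 : lam != 0 by rewrite gt_eqF.
set u := w - gL z.
have eu : forall y, dotv u y =
    lam^-1 * (dotv r y + Lpsi * dotv (z - zhat) y) - dotv (gL z) y.
  by move=> y; rewrite /u ew (dotvBl (lam^-1 *: _)) dotvZl dotvDl dotvZl.
have opt : forall x, H x -> h zhat + dotv u (x - zhat) <= h x.
  move=> x Hx.
  set b := x - zhat.
  have key : forall s, 0 < s -> s <= 1 -> 0 <= s * (lam * dotv (gL z) b - dotv r b
      + Lpsi * dotv (zhat - z) b + lam * (h x - h zhat))
      + s ^+ 2 * (Lpsi / 2 * enorm b ^+ 2).
    move=> s s0 s1.
    have s01 : 0 <= s <= 1 by rewrite s1 ltW.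
    have Hxs : H (zhat + s *: b) by rewrite /b seg_eq; apply: HB1cvxH.
    have := Hzhat (zhat + s *: b); rewrite !obj_in // lee_fin => hh.
    have hcv := HB1cvxh zhat x s Hzh Hx s01; rewrite -seg_eq -/b in hcv.
    have hcv' := ler_wpM2l (ltW Hlam) hcv.
    have e1 : zhat + s *: b - z = (zhat - z) + s *: b by rewrite addrAC.
    rewrite e1 !dotvDr !dotvZr (enormD2 (zhat - z) (s *: b)) ?dotvZr enormZ in hh. rewrite (ger0_norm (ltW s0)) in hh.
    rewrite exprMn in hh.
    nra.
  have key' := small_pos2 key.
  rewrite eu.
  have e2 : dotv (zhat - z) b = - dotv (z - zhat) b by rewrite -dotvNl opprB.
  rewrite e2 in key'.
  rewrite -(ler_pM2l Hlam).
  have -> : lam * (h zhat + (lam^-1 * (dotv r b + Lpsi * dotv (z - zhat) b) - dotv (gL z) b))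
     = lam * h zhat + (dotv r b + Lpsi * dotv (z - zhat) b) - lam * dotv (gL z) b.
    by field.
  nra.
set d := zhat - z.
set y := p0 + c *: g z.
set y' := p0 + c *: g zhat.
set pi := pr K y.
have Hseg : forall t, 0 <= t <= 1 -> H (z + t *: (zhat - z)).
  by move=> t t01; rewrite seg_eq; apply: HB1cvxH.
have hDelta : enorm (g zhat - g z) <= B1 * enorm d.
  apply: lip_g HB3diff _ => t t01; exact: B1ub (Hseg t t01).
have hpi : enorm pi <= enorm p0 + c * B0.
  apply: le_trans (pr_norm HK y) _; apply: le_trans (enormD _ _) _.
  rewrite lerD2l enormZ (ger0_norm (ltW Hc)) ler_pM2l //; exact: B0ub.
have hrem := remainder_g HB3diff HB3lip pi z zhat; rewrite -/d in hrem.
have hf := descent_f HB1cvxH hgrad HB2lip Hz Hzh; rewrite -/d in hf.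
have hy'y : y' - (y - pi) = c *: (g zhat - g z) + pi.
  by apply/matrixP => i j; rewrite /y' /y !mxE; ring.
have hE : Defs.edist y' (negset K) ^+ 2 <=
     c ^+ 2 * enorm (g zhat - g z) ^+ 2 + 2 * c * dotv (g zhat - g z) pi + enorm pi ^+ 2.
  have h1 := edist_le y' (pr_neg HK y); rewrite -/pi hy'y in h1.
  have h2 : 0 <= Defs.edist y' (negset K) by rewrite edist_eq // enorm_ge0.
  have h3 : Defs.edist y' (negset K) ^+ 2 <= enorm (c *: (g zhat - g z) + pi) ^+ 2.
    by rewrite ler_pXn2r ?nnegrE ?enorm_ge0.
  move: h3; rewrite (enormD2 (c *: _) pi) dotvZl enormZ exprMn (ger0_norm (ltW Hc)); lra.
have hsmooth : (f zhat + (Defs.edist y' (negset K) ^+ 2 - enorm p0 ^+ 2) / (2 * c))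
   - (f z + (Defs.edist y (negset K) ^+ 2 - enorm p0 ^+ 2) / (2 * c))
   - dotv (gL z) d <= Lam / 2 * enorm d ^+ 2.
  rewrite (edist_eq HK y) -/pi egL -/y -/pi dotvDl dotv_mul.
  rewrite dotvBr in hrem.
  have hdiv : (Defs.edist y' (negset K) ^+ 2 - enorm p0 ^+ 2) / (2 * c)
     - (enorm pi ^+ 2 - enorm p0 ^+ 2) / (2 * c) <=
     c / 2 * enorm (g zhat - g z) ^+ 2 + dotv (g zhat - g z) pi.
    have -> : (Defs.edist y' (negset K) ^+ 2 - enorm p0 ^+ 2) / (2 * c)
       - (enorm pi ^+ 2 - enorm p0 ^+ 2) / (2 * c) =
       (Defs.edist y' (negset K) ^+ 2 - enorm pi ^+ 2) / (2 * c).
      by field; rewrite gt_eqF.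
    rewrite ler_pdivrMr ?mulr_gt0 //.
    have -> : (c / 2 * enorm (g zhat - g z) ^+ 2 + dotv (g zhat - g z) pi) * (2 * c) =
      c ^+ 2 * enorm (g zhat - g z) ^+ 2 + 2 * c * dotv (g zhat - g z) pi.
      by field.
    lra.
  have hX : enorm (g zhat - g z) ^+ 2 <= B1 ^+ 2 * enorm d ^+ 2.
    have h0' : 0 <= B1 * enorm d by apply: mulr_ge0 => //; exact: enorm_ge0.
    by rewrite -exprMn ler_pXn2r ?nnegrE ?enorm_ge0.
  have hX' := ler_wpM2l (_ : 0 <= c / 2) hX.
  have hP := ler_wpM2r (_ : 0 <= Lg / 2 * enorm d ^+ 2) hpi.
  rewrite (dotvC (g zhat - g z) pi) in hdiv.
  rewrite /Lam /Lambda -/B0 -/B1.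
  have c2 : 0 <= c / 2 by apply: divr_ge0; [exact: ltW | ].
  have lg2 : 0 <= Lg / 2 * enorm d ^+ 2 by apply: mulr_ge0; [apply: divr_ge0; [exact: ltW|] | exact: sqr_ge0].
  have := hX' c2; have := hP lg2.
  move: hrem hf hdiv; clear; nra.
have desc : dotv r d - lam * dotv (gL z) d - Lpsi / 2 * enorm d ^+ 2 - eps
    <= lam * (h zhat - h z).
  have hv := Hv zhat; rewrite !Phi_in // -EFinD lee_fin -/y -/y' in hv.
  have q1 : zhat - z0 = (z - z0) + d by apply/matrixP => i j; rewrite /d !mxE; ring.
  have q2 : r = v - (z - z0) by apply/matrixP => i j; rewrite er !mxE; ring.
  rewrite q1 (enormD2 (z - z0) d) in hv.
  rewrite q2 dotvBl.
  have hs := ler_wpM2l (ltW Hlam) hsmooth.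
  rewrite eLp.
  move: hv hs; rewrite -/d; clear; nra.
have hU : lam * dotv u (z - zhat) =
    - dotv r d + Lpsi * enorm d ^+ 2 + lam * dotv (gL z) d.
  have zz : z - zhat = - d by rewrite /d opprB.
  rewrite eu zz !dotvNr !dotvNl opprK -enorm_sq.
  by field.
have optz := opt z Hz.
have F1 : Lpsi * enorm d ^+ 2 <= 2 * eps.
  have := ler_wpM2l (ltW Hlam) optz; move: desc hU; clear -Hlam; nra.
have F2 : h z - h zhat - dotv u (z - zhat) <= eps / lam.
  rewrite -(ler_pM2l Hlam) (mulrC lam (eps / lam)) divfK //.
  have := sqr_ge0 (enorm d); move: desc hU Lpsi0; clear -Hlam; nra.
have F3 : 0 <= h z - h zhat - dotv u (z - zhat) by lra.
have Herr' : 2 * eps <= sigma ^+ 2 * enorm r ^+ 2.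
  rewrite er; have := sqr_ge0 (enorm v); lra.
have sL0 : 0 < Num.sqrt Lpsi by rewrite sqrtr_gt0.
have sLsq : Num.sqrt Lpsi ^+ 2 = Lpsi by rewrite sqr_sqrtr // ltW.
have hdb : Lpsi * enorm d <= sigma * Num.sqrt Lpsi * enorm r.
  apply: sq_le; first by rewrite !mulr_ge0 ?enorm_ge0 ?sqrtr_ge0 // ltW.
  rewrite !exprMn sLsq.
  have := ler_wpM2l (ltW Lpsi0) F1; have := ler_wpM2l (ltW Lpsi0) Herr'.
  rewrite expr2; lra.
have hdb2 : Num.sqrt Lpsi * enorm d <= sigma * enorm r.
  rewrite -(ler_pM2l sL0) mulrA -expr2 sLsq.
  by rewrite mulrA (mulrC (Num.sqrt Lpsi) sigma).
have hw : enorm w <= lam^-1 * (1 + sigma * Num.sqrt Lpsi) * enorm r.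
  have il : 0 < lam^-1 by rewrite invr_gt0.
  rewrite ew enormZ (ger0_norm (ltW il)) -mulrA ler_pM2l //.
  apply: le_trans (enormD _ _) _.
  rewrite enormZ (ger0_norm (ltW Lpsi0)) enormB -/d; lra.
split.
  split.
    exists u; split.
      move=> x; case: (pselect (H x)) => Hx; last by rewrite (@ext_out _ _ H h x Hx) leey.
      rewrite !ext_in // -EFinD lee_fin.
      have := opt x Hx.
      have -> : x - zhat = (x - z) + (z - zhat) by apply/matrixP => i j; rewrite !mxE; ring.
      rewrite dotvDr edelta; lra.
    rewrite /u egL epk.
    move: (gradf z) (Dg z *m pr K (p0 + c *: g z)) => A B.
    by apply/matrixP => i j; rewrite !mxE; ring.
  split => //.
  rewrite edelta.
  have -> : (2 * lam)^-1 * sigma ^+ 2 * enorm r ^+ 2 = (sigma ^+ 2 * enorm r ^+ 2) / 2 / lam.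
    by field.
  rewrite ler_pM2r ?invr_gt0 //; lra.
have eg : g zhat + qhat = c^-1 *: (y' - phat).
  by apply/matrixP => i j; rewrite eqhat /y' !mxE; field; rewrite gt_eqF.
have ephat' : phat = pr K y' by rewrite ephat.
have hgdiff : enorm (gL zhat - gL z) <= Lam * enorm d.
  rewrite !egL -/y -/y' -ephat' -/pi.
  have -> : gradf zhat + Dg zhat *m phat - (gradf z + Dg z *m pi) =
     (gradf zhat - gradf z) + ((Dg zhat - Dg z) *m phat + Dg z *m (phat - pi)).
    rewrite mulmxBl mulmxBr.
    move: (gradf zhat) (gradf z) (Dg zhat *m phat) (Dg z *m phat) (Dg z *m pi) => A B C D E.
    by apply/matrixP => i j; rewrite !mxE; ring.
  apply: le_trans (enormD _ _) _.
  have h1 := HB2lip z zhat Hz Hzh; rewrite -/d in h1.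
  have h2 : enorm ((Dg zhat - Dg z) *m phat) <= Lg * enorm d * (enorm p0 + c * B0).
    apply: le_trans (opnormP _ _) _.
    have := HB3lip z zhat; rewrite -/d => hl.
    have hph : enorm phat <= enorm p0 + c * B0.
      rewrite ephat'; apply: le_trans (pr_norm HK y') _; apply: le_trans (enormD _ _) _.
      rewrite lerD2l enormZ (ger0_norm (ltW Hc)) ler_pM2l //; exact: B0ub.
    apply: le_trans (ler_wpM2r (enorm_ge0 _) hl) _.
    rewrite ler_wpM2l // mulr_ge0 ?enorm_ge0 //; exact: ltW.
  have h3 : enorm (Dg z *m (phat - pi)) <= B1 * (c * (B1 * enorm d)).
    apply: le_trans (opnormP _ _) _.
    apply: le_trans (ler_wpM2r (enorm_ge0 _) (B1ub _ Hz)) _.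
    rewrite ler_wpM2l //.
    rewrite ephat'; apply: le_trans (pr_lip HK y' y) _.
    have -> : y' - y = c *: (g zhat - g z) by apply/matrixP => i j; rewrite /y' /y !mxE; ring.
    by rewrite enormZ (ger0_norm (ltW Hc)) ler_pM2l.
  have h4 := enormD ((Dg zhat - Dg z) *m phat) (Dg z *m (phat - pi)).
  rewrite /Lam /Lambda -/B0 -/B1.
  have := enorm_ge0 d; move: h1 h2 h3 h4; clear; nra.
split.
  exists u; split.
    move=> x; case: (pselect (H x)) => Hx; last by rewrite (@ext_out _ _ H h x Hx) leey.
    rewrite !ext_in // -EFinD lee_fin subr0.
    exact: opt x Hx.
  rewrite ewhat /u ephat' egL egL -/y'.
  move: (gradf zhat) (gradf z) (Dg zhat *m pr K y') (Dg z *m pr K (p0 + c *: g z)) => A B C D.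
  by apply/matrixP => i j; rewrite !mxE; ring.
split.
  by rewrite eg dotvZl ephat' pr_orth // mulr0.
split.
  rewrite eg /negset /= -scalerN; apply: (coneZ HK); last by rewrite invr_ge0 ltW.
  by have := pr_neg HK y'; rewrite -ephat'.
split.
  by rewrite ephat'; exact: pr_dual.
split.
  rewrite ewhat -addrA; apply: le_trans (enormD _ _) _.
  have hL : lam * Lam <= Lpsi by rewrite eLp; lra.
  have : Lam * enorm d <= lam^-1 * (sigma * Num.sqrt Lpsi * enorm r).
    rewrite -(ler_pM2l Hlam) mulVKf // mulrA.
    apply: le_trans hdb; apply: ler_wpM2r => //; exact: enorm_ge0.
  move: hw hgdiff; clear; nra.
have ic : 0 < c^-1 by rewrite invr_gt0.
rewrite eqhat enormZ (ger0_norm (ltW ic)).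
have h1 := enormDB p0 pk phat; rewrite (enormB p0 pk) in h1.
have h2 : enorm (pk - phat) <= c * (B1 * enorm d).
  rewrite epk ephat'; apply: le_trans (pr_lip HK y y') _.
  have -> : y - y' = - (c *: (g zhat - g z)).
    by apply/matrixP => i j; rewrite /y' /y !mxE; ring.
  by rewrite enormN enormZ (ger0_norm (ltW Hc)) ler_pM2l.
have h3 : enorm d <= sigma / Num.sqrt Lpsi * enorm r.
  by rewrite mulrAC ler_pdivlMr // mulrC.
have h4 := ler_wpM2l B1ge0 h3.
have h5 : c^-1 * (c * (B1 * enorm d)) = B1 * enorm d by rewrite mulKf ?gt_eqF.
have h6 := ler_wpM2l (ltW ic) h1.
have h7 := ler_wpM2l (ltW ic) h2.
rewrite h5 in h7.
rewrite mulrA in h4.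
move: h4 h6 h7; clear; nra.
Qed.
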